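(* Let $\mathcal{A}$ and $\mathcal{B}$ be $C^{*}$-algebras, let $\Xi$ be a Hilbert $\mathcal{A}$-module and $\nabla$ a Hilbert $\mathcal{B}$-module. Let $p\in[0,1)$, let $\theta$ be a nonnegative real number and let $f:\Xi\rightarrow\nabla$ be a mapping such that $$\| f(\mu x+y)-\mu f(x)-f(y)\| \leq \theta\left(\|x\|^{p}+\|y\|^{p}\right)$$ and $$\| f(\langle x,y\rangle z)-\langle f(x),f(y)\rangle f(z)\| \leq \theta\left(\|x\|^{p}+\|y\|^{p}+\|z\|^{p}\right)$$ for all $x,y,z\in\Xi$ and all $\mu\in\mathbb{T}$. Then there exists a unique Hilbert $C^{*}$-module homomorphism $H:\Xi\rightarrow\nabla$ such that $$\|f(x)-H(x)\|\leq \frac{2\theta}{2-2^{p}}\|x\|^{p}$$ for all $x\in\Xi$.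
   Context: $\mathbb{T}=\{z\in\mathbb{C}:|z|=1\}$. For a $C^{*}$-algebra $\mathcal{A}$, a (left) Hilbert $\mathcal{A}$-module is a complex linear space $\Xi$ with a compatible left $\mathcal{A}$-module action ($\lambda(ax)=(\lambda a)x=a(\lambda x)$) and a map $\langle\cdot,\cdot\rangle:\Xi\times\Xi\to\mathcal{A}$ that is linear in the first variable, satisfies $\langle ax,y\rangle=a\langle x,y\rangle$, $\langle x,y\rangle^{*}=\langle y,x\rangle$, $\langle x,x\rangle\geq 0$ with equality iff $x=0$, and such that $\Xi$ is complete in the norm $\|x\|=\|\langle x,x\rangle\|^{1/2}$. For a Hilbert $\mathcal{A}$-module $\Xi$ and a Hilbert $\mathcal{B}$-module $\nabla$, a Hilbert $C^{*}$-module homomorphism is a $\mathbb{C}$-linear map $H:\Xi\to\nabla$ with $H(\langle x,y\rangle z)=\langle H(x),H(y)\rangle H(z)$ for all $x,y,z\in\Xi$. *)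

(* Defs.v *)
From HB Require Import structures.
From mathcomp Require Import all_boot all_order all_algebra.
From mathcomp Require Import complex.
From mathcomp Require Import all_classical all_reals all_analysis.
Set Implicit Arguments. Unset Strict Implicit. Unset Printing Implicit Defensive.
Import Order.TTheory GRing.Theory Num.Theory.
Import numFieldNormedType.Exports.
Local Open Scope ring_scope.

(* Real-valued norm of an element of a normed complex vector space
   (the norm `|x| : R[i] is always a nonnegative real; we take its real part). *)
Definition nrm (R : realType) (V : normedModType R[i]) (x : V) : R :=
  complex.Re `|x|.

Definition is_Cstar_algebra (R : realType) (A : completeNormedModType R[i])
    (mul : A -> A -> A) (star : A -> A) : Prop :=
  (forall a b c, mul a (mul b c) = mul (mul a b) c) /\
      (forall a b c, mul (a + b) c = mul a c + mul b c) /\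
      (forall a b c, mul a (b + c) = mul a b + mul a c) /\
      (forall (l : R[i]) a b, mul (l *: a) b = l *: mul a b
                              /\ mul a (l *: b) = l *: mul a b) /\
      (forall a, star (star a) = a) /\
      (forall a b, star (a + b) = star a + star b) /\
      (forall (l : R[i]) a, star (l *: a) = (l^*)%C *: star a) /\
      (forall a b, star (mul a b) = mul (star b) (star a)) /\
      (forall a b, nrm (mul a b) <= nrm a * nrm b)/\
      (forall a, nrm (mul (star a) a) = nrm a ^+ 2).

Definition cstar_positive (R : realType) (A : completeNormedModType R[i])
    (mul : A -> A -> A) (star : A -> A) (a : A) : Prop :=
  exists b, a = mul (star b) b.

Definition is_Hilbert_module (R : realType) (A : completeNormedModType R[i])
    (mul : A -> A -> A) (star : A -> A)
    (X : completeNormedModType R[i]) (act : A -> X -> X) (ip : X -> X -> A)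
    : Prop :=
  (forall a b x, act (a + b) x = act a x + act b x) /\
      (forall a x y, act a (x + y) = act a x + act a y) /\
      (forall a b x, act (mul a b) x = act a (act b x)) /\
      (forall (l : R[i]) a x, l *: act a x = act (l *: a) x
                              /\ l *: act a x = act a (l *: x)) /\
      (forall x y z, ip (x + y) z = ip x z + ip y z) /\
      (forall (l : R[i]) x y, ip (l *: x) y = l *: ip x y) /\
      (forall a x y, ip (act a x) y = mul a (ip x y)) /\
      (forall x y, star (ip x y) = ip y x) /\
      (forall x, cstar_positive mul star (ip x x) /\ (ip x x = 0 -> x = 0))/\
      (forall x, nrm x = Num.sqrt (nrm (ip x x))).

Definition is_Hilbert_hom (R : realType)
    (A B : completeNormedModType R[i])
    (X Y : completeNormedModType R[i])
    (actX : A -> X -> X) (ipX : X -> X -> A)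
    (actY : B -> Y -> Y) (ipY : Y -> Y -> B) (H : X -> Y) : Prop :=
  (forall x y, H (x + y) = H x + H y) /\
      (forall (l : R[i]) x, H (l *: x) = l *: H x)/\
      (forall x y z, H (actX (ipX x y) z) = actY (ipY (H x) (H y)) (H z)).

(* Main.v *)
Require Import Defs.
From HB Require Import structures.
From mathcomp Require Import all_boot all_order all_algebra.
From mathcomp Require Import complex.
From mathcomp Require Import all_classical all_reals all_analysis.
Import Order.TTheory GRing.Theory Num.Theory.
Import numFieldNormedType.Exports.
Local Open Scope ring_scope.
Set Implicit Arguments. Unset Strict Implicit. Unset Printing Implicit Defensive.
Local Open Scope complex_scope.
Local Open Scope classical_set_scope.
Local Open Scope ring_scope.
Set Implicit Arguments. Unset Strict Implicit. Unset Printing Implicit Defensive.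
From mathcomp Require Import ring lra.

Section Nrm.
Variable R : realType.
Variable V : normedModType R[i].

Lemma normC_real (x : V) : `|x| = (nrm x)%:C.
Proof.
have := normr_ge0 x; rewrite /nrm lecE /= => /andP[/eqP h _].
by case: `|x| h => a b /= ->.
Qed.

Lemma nrm_ge0 (x : V) : 0 <= nrm x.
Proof. by have := normr_ge0 x; rewrite normC_real lecR. Qed.

Lemma nrmD (x y : V) : nrm (x + y) <= nrm x + nrm y.
Proof. by have := ler_normD x y; rewrite !normC_real -rmorphD lecR. Qed.

Lemma nrmZ (l : R[i]) (x : V) : nrm (l *: x) = complex.Re (`|l| : R[i]) * nrm x.
Proof.
rewrite /nrm normrZ. rewrite [`|x|]normC_real.
have := normr_ge0 l; rewrite lecE /= => /andP[/eqP h _].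
by case: `|l| h => a b /= ->; rewrite /= !mulr0 subr0.
Qed.

Lemma nrmZr (r : R) (x : V) : nrm (r%:C *: x) = `|r| * nrm x.
Proof. rewrite nrmZ; congr (_ * _). rewrite normc_def /= expr0n /= addr0 sqrtr_sqr //. Qed.

Lemma nrm_eq0 (x : V) : nrm x = 0 -> x = 0.
Proof. by move=> h; apply/normr0_eq0; rewrite normC_real h. Qed.

Lemma nrm0 : nrm (0 : V) = 0.
Proof. by rewrite /nrm normr0. Qed.

Lemma nrmN (x : V) : nrm (- x) = nrm x.
Proof. by rewrite /nrm normrN. Qed.

Lemma nrmB (x y : V) : nrm (x - y) = nrm (y - x).
Proof. by rewrite -nrmN opprB. Qed.

End Nrm.


Section Lim.
Variable R : realType.

Lemma geo_small (c q : R) : 0 <= q < 1 -> forall e, 0 < e ->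
  \forall n \near \oo, c * q ^+ n <= e.
Proof.
move=> /andP[q0 q1] e e0.
have qn : `|q| < 1 by rewrite ger0_norm.
have := cvg_geometric c qn; move=> /cvgr_dist_le /(_ e e0).
apply: filterS => n /=; rewrite sub0r normrN => h.
exact: le_trans (ler_norm _) h.
Qed.

Variable V : normedModType R[i].

Lemma lim_le (u : nat -> V) (L v : V) (B : R) :
  u @ \oo --> L -> (\forall n \near \oo, nrm (v - u n) <= B) ->
  nrm (v - L) <= B.
Proof.
move=> uL hB; apply/ler_addgt0Pr => e e0.
have e0' : (0 : R[i]) < e%:C by rewrite ltcR.
have := uL; move=> /cvgr_dist_lt /(_ _ e0').
move=> hL.
have [n [h1 h2]] := filter_ex (filterI hB hL).
have h3 : nrm (L - u n) < e by rewrite -ltcR -normC_real.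
have := nrmD (v - u n) (u n - L).
rewrite addrA subrK => h4.
apply: (le_trans h4); apply: lerD => //.
by rewrite nrmB ltW.
Qed.

Lemma lim_eq (u : nat -> V) (L v : V) (c q : R) :
  0 <= q < 1 -> u @ \oo --> L -> (forall n, nrm (v - u n) <= c * q ^+ n) ->
  L = v.
Proof.
move=> hq uL hb.
suff : nrm (v - L) <= 0.
  move=> h; apply/eqP; rewrite eq_sym -subr_eq0; apply/eqP/nrm_eq0.
  by apply/le_anti; rewrite h nrm_ge0.
apply/ler_addgt0Pr => e e0; rewrite add0r.
apply: (lim_le uL).
by apply: filterS (geo_small c hq e0) => n; apply: le_trans.
Qed.

End Lim.


Section Geo.
Variable R : realType.
Variable V : completeNormedModType R[i].

Lemma ev_ge (n : nat) : \forall m \near \oo, (n <= m)%N.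
Proof. by exists n. Qed.

Lemma geom_cvg (g : nat -> V) (c q : R) : 0 <= q < 1 ->
  (forall n, nrm (g n.+1 - g n) <= c * q ^+ n) ->
  exists L, g @ \oo --> L /\ forall n, nrm (g n - L) <= c * q ^+ n / (1 - q).
Proof.
move=> hq hg; have /andP[q0 q1] := hq.
have c0 : 0 <= c by have := hg 0%N; rewrite expr0 mulr1; apply: le_trans; apply: nrm_ge0.
have q1' : 0 < 1 - q by rewrite subr_gt0.
have step : forall n k, nrm (g (n + k)%N - g n) <= c * q ^+ n * (1 - q ^+ k) / (1 - q).
  move=> n; elim=> [|k IH].
    by rewrite addn0 subrr nrm0 expr0 subrr mulr0 mul0r.
  rewrite addnS; have := nrmD (g (n + k).+1 - g (n + k)%N) (g (n + k)%N - g n).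
  rewrite addrA subrK => h; apply: (le_trans h).
  have := lerD (hg (n + k)%N) IH => h'; apply: (le_trans h').
  rewrite le_eqVlt; apply/orP; left; apply/eqP.
  rewrite exprD exprS; field; by rewrite lt0r_neq0.
have bnd : forall n m, (n <= m)%N -> nrm (g n - g m) <= c * q ^+ n / (1 - q).
  move=> n m /subnKC <-; rewrite nrmB; apply: (le_trans (step n (m - n)%N)).
  rewrite ler_pM2r ?invr_gt0 // -[leRHS]mulr1 ler_wpM2l ?mulr_ge0 ?exprn_ge0 //.
  by rewrite lerBlDr lerDl exprn_ge0.
have cv : cvg (g @ \oo).
  apply/cauchy_cvgP/cauchy_exP => eps.
  rewrite ltcE => /andP[/eqP ie e0].
  have [N _ hN] := geo_small (c / (1 - q)) hq (divr_gt0 e0 (ltr0n _ 2 : (0:R) < 2%:R)).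
  exists (g N); exists N => // m /= hm.
  rewrite -ball_normE /ball_ /= normC_real.
  have := bnd _ _ hm; rewrite mulrAC => h.
  have h2 := hN N (leqnn N).
  rewrite ltcE /= ie eqxx /=.
  apply: (le_lt_trans h); apply: (le_lt_trans h2).
  by rewrite ltr_pdivrMr // ltr_pMr // ltr1n.
exists (lim (g @ \oo)); split => // n.
apply: (lim_le (u := g) (L := lim (g @ \oo))) => //.
by apply: filterS (ev_ge n) => m /bnd.
Qed.
End Geo.


Section HM.
Variable R : realType.
Variables (A : completeNormedModType R[i]) (mul : A -> A -> A) (star : A -> A).
Variables (X : completeNormedModType R[i]) (act : A -> X -> X) (ip : X -> X -> A).
Hypothesis hA : is_Cstar_algebra mul star.
Hypothesis hX : is_Hilbert_module mul star act ip.

Lemma add_morphB (U W : zmodType) (h : U -> W) :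
  (forall a b, h (a + b) = h a + h b) -> forall a b, h (a - b) = h a - h b.
Proof.
move=> hD.
have h0 : h 0 = 0.
  by apply: (addrI (h 0)); rewrite -hD !addr0.
have hN : forall a, h (- a) = - h a.
  by move=> a; apply: (addrI (h a)); rewrite -hD !subrr h0.
by move=> a b; rewrite hD hN.
Qed.

Lemma star_add a b : star (a + b) = star a + star b.
Proof. by case: hA => _ [_ [_ [_ [_ [H _]]]]]. Qed.
Lemma star_scale (l : R[i]) a : star (l *: a) = l^* *: star a.
Proof. by case: hA => _ [_ [_ [_ [_ [_ [H _]]]]]]. Qed.
Lemma starK a : star (star a) = a.
Proof. by case: hA => _ [_ [_ [_ [H _]]]]. Qed.
Lemma star_mul a b : star (mul a b) = mul (star b) (star a).
Proof. by case: hA => _ [_ [_ [_ [_ [_ [_ [H _]]]]]]]. Qed.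
Lemma nrm_mul a b : nrm (mul a b) <= nrm a * nrm b.
Proof. by case: hA => _ [_ [_ [_ [_ [_ [_ [_ [H _]]]]]]]]. Qed.
Lemma nrm_cstar a : nrm (mul (star a) a) = nrm a ^+ 2.
Proof. by case: hA => _ [_ [_ [_ [_ [_ [_ [_ [_ H]]]]]]]]. Qed.

Lemma nrm_star_le a : nrm a <= nrm (star a).
Proof.
have := nrm_mul (star a) a; rewrite nrm_cstar expr2 => h.
have [a0|a0] := eqVneq (nrm a) 0; first by rewrite a0 nrm_ge0.
have ap : 0 < nrm a by rewrite lt0r a0 nrm_ge0.
by rewrite -(ler_pM2r ap).
Qed.

Lemma nrm_star a : nrm (star a) = nrm a.
Proof. by apply/le_anti; rewrite nrm_star_le andbT -{2}(starK a) nrm_star_le. Qed.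

Lemma act_addl a b x : act (a + b) x = act a x + act b x.
Proof. by case: hX => H _. Qed.
Lemma act_addr a x y : act a (x + y) = act a x + act a y.
Proof. by case: hX => _ [H _]. Qed.
Lemma act_scaler (l : R[i]) a x : act a (l *: x) = l *: act a x.
Proof. by case: hX => _ [_ [_ [H _]]]; case: (H l a x). Qed.
Lemma act_scalel (l : R[i]) a x : act (l *: a) x = l *: act a x.
Proof. by case: hX => _ [_ [_ [H _]]]; case: (H l a x). Qed.
Lemma ip_addl x y z : ip (x + y) z = ip x z + ip y z.
Proof. by case: hX => _ [_ [_ [_ [H _]]]]. Qed.
Lemma ip_scalel (l : R[i]) x y : ip (l *: x) y = l *: ip x y.
Proof. by case: hX => _ [_ [_ [_ [_ [H _]]]]]. Qed.
Lemma ip_act a x y : ip (act a x) y = mul a (ip x y).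
Proof. by case: hX => _ [_ [_ [_ [_ [_ [H _]]]]]]. Qed.
Lemma ip_star x y : star (ip x y) = ip y x.
Proof. by case: hX => _ [_ [_ [_ [_ [_ [_ [H _]]]]]]]. Qed.
Lemma nrm_ipE x : nrm x = Num.sqrt (nrm (ip x x)).
Proof. by case: hX => _ [_ [_ [_ [_ [_ [_ [_ [_ H]]]]]]]]. Qed.

Lemma nrm_ip x : nrm (ip x x) = nrm x ^+ 2.
Proof. by rewrite nrm_ipE sqr_sqrtr // nrm_ge0. Qed.

Lemma act_subl a b x : act (a - b) x = act a x - act b x.
Proof. by apply: (add_morphB (h := fun a => act a x)) => ? ?; apply: act_addl. Qed.
Lemma act_subr a x y : act a (x - y) = act a x - act a y.
Proof. by apply: add_morphB => ? ?; apply: act_addr. Qed.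
Lemma ip_subl x y z : ip (x - y) z = ip x z - ip y z.
Proof. by apply: (add_morphB (h := fun x => ip x z)) => ? ?; apply: ip_addl. Qed.
Lemma ip_addr x y z : ip z (x + y) = ip z x + ip z y.
Proof. by rewrite -ip_star ip_addl star_add !ip_star. Qed.
Lemma ip_subr x y z : ip z (x - y) = ip z x - ip z y.
Proof. by apply: add_morphB => ? ?; apply: ip_addr. Qed.
Lemma ip_scaler (l : R[i]) x y : ip x (l *: y) = l^* *: ip x y.
Proof. by rewrite -ip_star ip_scalel star_scale ip_star. Qed.

Lemma act_nrm a x : nrm (act a x) <= nrm a * nrm x.
Proof.
have e : ip (act a x) (act a x) = mul a (mul (ip x x) (star a)).
  by rewrite ip_act -ip_star ip_act star_mul ip_star.
have h : nrm (act a x) ^+ 2 <= (nrm a * nrm x) ^+ 2.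
  rewrite -nrm_ip e exprMn -nrm_ip.
  apply: (le_trans (nrm_mul _ _)).
  rewrite expr2 -mulrA ler_wpM2l ?nrm_ge0 //.
  apply: (le_trans (nrm_mul _ _)).
  by rewrite nrm_star mulrC.
by rewrite -ler_sqrt ?sqrtr_sqr ?ger0_norm ?mulr_ge0 ?nrm_ge0 // ?exprn_ge0 ?mulr_ge0 ?nrm_ge0 in h.
Qed.


Lemma ip_expand (c : R[i]) u v : ip (u + c *: v) (u + c *: v) =
  ip u u + c^* *: ip u v + c *: ip v u + (c * c^*) *: ip v v.
Proof.
rewrite !ip_addl !ip_addr !ip_scalel !ip_scaler scalerA.
by rewrite addrA; congr (_ + _); rewrite mulrC.
Qed.

Definition lc (a b c d : A) (k1 k2 k3 k4 : R[i]) :=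
  k1 *: a + k2 *: b + k3 *: c + k4 *: d.

Lemma lcD a b c d k1 k2 k3 k4 l1 l2 l3 l4 :
  lc a b c d k1 k2 k3 k4 + lc a b c d l1 l2 l3 l4 =
  lc a b c d (k1 + l1) (k2 + l2) (k3 + l3) (k4 + l4).
Proof.
rewrite /lc !scalerDl addrACA; congr (_ + _).
rewrite addrACA; congr (_ + _).
by rewrite addrACA.
Qed.

Lemma lcN a b c d k1 k2 k3 k4 :
  - lc a b c d k1 k2 k3 k4 = lc a b c d (- k1) (- k2) (- k3) (- k4).
Proof. by rewrite /lc !opprD !scaleNr. Qed.

Lemma lcZ a b c d s k1 k2 k3 k4 :
  s *: lc a b c d k1 k2 k3 k4 = lc a b c d (s * k1) (s * k2) (s * k3) (s * k4).
Proof. by rewrite /lc !scalerDr !scalerA. Qed.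

Lemma ip_expand' (c : R[i]) u v : ip (u + c *: v) (u + c *: v) =
  lc (ip u u) (ip u v) (ip v u) (ip v v) 1 c^* c (c * c^*).
Proof. by rewrite ip_expand /lc scale1r. Qed.

Lemma polar u v : (4%:R : R[i]) *: ip u v =
  (ip (u + 1 *: v) (u + 1 *: v) - ip (u + (-1) *: v) (u + (-1) *: v)) +
  'i *: (ip (u + 'i *: v) (u + 'i *: v) - ip (u + (-'i) *: v) (u + (-'i) *: v)).
Proof.
rewrite !ip_expand' !lcN !lcD lcZ.
have -> : (4%:R : R[i]) *: ip u v = lc (ip u u) (ip u v) (ip v u) (ip v v) 0 4%:R 0 0.
  by rewrite /lc !scale0r add0r !addr0.
have ic : 'i^* = - 'i :> R[i] by apply/eqP; rewrite eq_complex /= oppr0 !eqxx.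
have i2 : 'i * 'i = -1 :> R[i] by rewrite -expr2 sqr_i.
rewrite lcD; congr lc; simpc => //.
rewrite -[LHS](rmorph_nat (real_complex R)) /=.
by congr Complex; lra.
Qed.


Lemma ip_unit_bound (c : R[i]) u v : `|c| = 1 ->
  nrm (ip (u + c *: v) (u + c *: v)) <= (nrm u + nrm v) ^+ 2.
Proof.
move=> c1; rewrite nrm_ip lerXn2r ?nnegrE ?nrm_ge0 ?addr_ge0 ?nrm_ge0 //.
by apply: (le_trans (nrmD _ _)); rewrite nrmZ c1 /= mul1r.
Qed.

Lemma ip_bound1 u v : nrm (ip u v) <= (nrm u + nrm v) ^+ 2.
Proof.
have n1 : `|1 : R[i]| = 1 by rewrite normr1.
have nm1 : `|-1 : R[i]| = 1 by rewrite normrN normr1.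
have ni : `|'i : R[i]| = 1.
  by rewrite normc_def /= expr0n expr1n add0r sqrtr1.
have nmi : `|- 'i : R[i]| = 1 by rewrite normrN.
have h4 : nrm ((4%:R : R[i]) *: ip u v) = 4%:R * nrm (ip u v).
  by rewrite nrmZ normr_nat.
suff : 4%:R * nrm (ip u v) <= 4%:R * (nrm u + nrm v) ^+ 2.
  by rewrite ler_pM2l.
rewrite -h4 polar.
set a1 := ip _ _; set a2 := ip _ _; set a3 := ip _ _; set a4 := ip _ _.
have b1 := ip_unit_bound u v n1; have b2 := ip_unit_bound u v nm1.
have b3 := ip_unit_bound u v ni; have b4 := ip_unit_bound u v nmi.
rewrite -/a1 in b1; rewrite -/a2 in b2; rewrite -/a3 in b3; rewrite -/a4 in b4.
apply: (le_trans (nrmD _ _)); rewrite nrmZ ni /= mul1r.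
have e1 := nrmD a1 (- a2); have e2 := nrmD a3 (- a4).
rewrite nrmN in e1; rewrite nrmN in e2.
lra.
Qed.

Lemma ip0l v : ip 0 v = 0.
Proof. by rewrite -(subrr v) ip_subl subrr. Qed.
Lemma ip0r v : ip v 0 = 0.
Proof. by rewrite -(subrr v) ip_subr subrr. Qed.

Lemma ip_bound u v : nrm (ip u v) <= 4%:R * nrm u * nrm v.
Proof.
have [a0|a0] := eqVneq (nrm u) 0.
  by rewrite (nrm_eq0 a0) ip0l nrm0 nrm0 mulr0 mul0r.
have [b0|b0] := eqVneq (nrm v) 0.
  by rewrite (nrm_eq0 b0) ip0r nrm0 nrm0 !mulr0.
have ap : 0 < nrm u by rewrite lt0r a0 nrm_ge0.
have bp : 0 < nrm v by rewrite lt0r b0 nrm_ge0.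
set t := Num.sqrt (nrm v / nrm u).
have tp : 0 < t by rewrite sqrtr_gt0 divr_gt0.
have t2 : t ^+ 2 = nrm v / nrm u by rewrite sqr_sqrtr // ltW // divr_gt0.
have -> : ip u v = ip (t%:C *: u) ((t^-1)%:C *: v).
  have cr : forall x : R, (x%:C)^* = x%:C.
    by move=> x; apply/eqP; rewrite eq_complex /= oppr0 !eqxx.
  by rewrite ip_scalel ip_scaler cr scalerA -rmorphM mulfV ?gt_eqF // scale1r.
apply: (le_trans (ip_bound1 _ _)).
have t0 : 0 <= t by exact: ltW.
rewrite !nrmZr !ger0_norm ?invr_ge0 //.
rewrite le_eqVlt; apply/orP; left; apply/eqP.
rewrite sqrrD !exprMn exprVn t2.
field.
by rewrite -/(nrm u) -/(nrm v) a0 b0 gt_eqF.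
Qed.

End HM.


Section Main.
Variable R : realType.
Variables (A : completeNormedModType R[i]) (mulA : A -> A -> A) (starA : A -> A).
Variables (B : completeNormedModType R[i]) (mulB : B -> B -> B) (starB : B -> B).
Variables (X : completeNormedModType R[i]) (actX : A -> X -> X) (ipX : X -> X -> A).
Variables (Y : completeNormedModType R[i]) (actY : B -> Y -> Y) (ipY : Y -> Y -> B).
Hypotheses (hA : is_Cstar_algebra mulA starA) (hB : is_Cstar_algebra mulB starB).
Hypotheses (hX : is_Hilbert_module mulA starA actX ipX)
  (hY : is_Hilbert_module mulB starB actY ipY).
Variables (p theta : R).
Hypotheses (hp0 : 0 <= p) (hp1 : p < 1) (htheta : 0 <= theta).
Variable (f : X -> Y).
Hypothesis h1 : forall (mu : R[i]) (x y : X), `|mu| = 1 ->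
          nrm (f (mu *: x + y) - mu *: f x - f y)
            <= theta * (powR (nrm x) p + powR (nrm y) p).
Hypothesis h2 : forall x y z : X,
          nrm (f (actX (ipX x y) z) - actY (ipY (f x) (f y)) (f z))
            <= theta * (powR (nrm x) p + powR (nrm y) p + powR (nrm z) p).

Definition P2 := powR 2 p.
Definition q := P2 / 2.

Lemma P2_ge1 : 1 <= P2.
Proof.
have := @ler_powR R 2 (ler1n _ 2) 0 p hp0.
by rewrite powRr0.
Qed.

Lemma P2_lt2 : P2 < 2.
Proof.
rewrite /P2 /powR ifF; last by apply/negbTE; rewrite pnatr_eq0.
have h2p : (2 : R) \in Num.pos by rewrite posrE ltr0n.
rewrite -[X in _ < X](lnK h2p) ltr_expR gtr_pMl //.
by rewrite ln_gt0 // ltr1n.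
Qed.

Lemma q_ge0 : 0 <= q.
Proof. by rewrite /q divr_ge0 // powR_ge0. Qed.

Lemma q_lt1 : q < 1.
Proof. by rewrite /q ltr_pdivrMr // mul1r P2_lt2. Qed.

Lemma hq : 0 <= q < 1.
Proof. by rewrite q_ge0 q_lt1. Qed.

Lemma powR_2n (n : nat) (a : R) : 0 <= a ->
  powR (2 ^+ n * a) p = P2 ^+ n * powR a p.
Proof.
move=> a0; elim: n => [|n IH]; first by rewrite !expr0 !mul1r.
rewrite exprS -mulrA powRM ?IH ?mulrA // ?mulr_ge0 ?exprn_ge0 //.
by rewrite exprS.
Qed.

Definition sc (n : nat) : R[i] := (2 ^+ n : R)%:C.
Definition isc (n : nat) : R[i] := ((2 ^+ n)^-1 : R)%:C.
Definition g (x : X) (n : nat) : Y := isc n *: f (sc n *: x).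

Lemma nrm_sc (V : normedModType R[i]) n (x : V) : nrm (sc n *: x) = 2 ^+ n * nrm x.
Proof. by rewrite nrmZr ger0_norm // exprn_ge0. Qed.

Lemma nrm_isc (V : normedModType R[i]) n (x : V) : nrm (isc n *: x) = (2 ^+ n)^-1 * nrm x.
Proof. by rewrite nrmZr ger0_norm // invr_ge0 exprn_ge0. Qed.

Lemma sc_isc n : sc n * isc n = 1.
Proof. by rewrite /sc /isc -rmorphM mulfV // expf_neq0. Qed.


Lemma two_scale (V : lmodType R[i]) (v : V) : (2 : R)%:C *: v = v + v.
Proof. by rewrite rmorphD rmorph1 scalerDl scale1r. Qed.

Lemma dbl u : nrm (f ((2 : R)%:C *: u) - (2 : R)%:C *: f u) <= 2 * theta * powR (nrm u) p.
Proof.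
have := h1 u u (normr1 _); rewrite !scale1r !two_scale opprD addrA => h.
by apply: (le_trans h); rewrite le_eqVlt; apply/orP; left; apply/eqP; ring.
Qed.

Lemma sc_S n (x : X) : sc n.+1 *: x = (2 : R)%:C *: (sc n *: x).
Proof. by rewrite /sc scalerA -rmorphM exprS. Qed.

Lemma isc_S n : isc n = isc n.+1 * (2 : R)%:C.
Proof. rewrite /isc -rmorphM; congr (_%:C); rewrite exprS; field; by rewrite expf_neq0. Qed.

Lemma sc0 : sc 0 = 1.
Proof. by rewrite /sc expr0. Qed.
Lemma isc0 : isc 0 = 1.
Proof. by rewrite /isc expr0 invr1. Qed.

Lemma g0 x : g x 0 = f x.
Proof. by rewrite /g sc0 isc0 !scale1r. Qed.

Definition cx (x : X) := theta * powR (nrm x) p.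

Lemma g_step x n : nrm (g x n.+1 - g x n) <= cx x * q ^+ n.
Proof.
have -> : g x n.+1 - g x n =
   isc n.+1 *: (f ((2 : R)%:C *: (sc n *: x)) - (2 : R)%:C *: f (sc n *: x)).
  by rewrite /g -sc_S scalerBr [in RHS]scalerA -isc_S.
rewrite nrm_isc; apply: le_trans.
  by apply: ler_wpM2l; [rewrite invr_ge0 exprn_ge0 | apply: dbl].
rewrite nrm_sc powR_2n ?nrm_ge0 // /cx /q.
rewrite le_eqVlt; apply/orP; left; apply/eqP.
rewrite exprMn exprVn exprS; field.
by rewrite expf_neq0.
Qed.


Definition H x := lim (g x @ \oo).

Lemma H_cvg x : g x @ \oo --> H x /\ forall n, nrm (g x n - H x) <= cx x * q ^+ n / (1 - q).
Proof.
have [L [cv b]] := geom_cvg hq (g_step x).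
have e : H x = L by apply: (cvg_lim (@norm_hausdorff _ Y)).
by rewrite e.
Qed.

Lemma H_bound x : nrm (f x - H x) <= 2 * theta / (2 - powR 2 p) * powR (nrm x) p.
Proof.
have := (H_cvg x).2 0%N; rewrite g0 expr0 mulr1 => h; apply: (le_trans h).
rewrite le_eqVlt; apply/orP; left; apply/eqP.
rewrite /cx /q -/P2; field.
by rewrite subr_eq0 gt_eqF // P2_lt2.
Qed.

Lemma H_near x (c : R) (v : Y) : 
  (forall n, nrm (v - g x n) <= c * q ^+ n) -> H x = v.
Proof. by move=> hb; apply: (lim_eq hq (H_cvg x).1 hb). Qed.


Lemma id3 (V : zmodType) (a b c d e : V) : a + b - c = (a - d) + (b - e) + (d + e - c).
Proof. by rewrite [(a - d) + _]addrACA -opprD addrA subrK. Qed.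

Lemma id4 (k mu : R[i]) (F M Yv : Y) :
  mu *: (k *: M) + k *: Yv - k *: F = - (k *: (F - mu *: M - Yv)).
Proof.
rewrite !scalerBr scalerA mulrC -scalerA.
by rewrite opprB opprB addrCA addrA [_ + k *: Yv]addrC.
Qed.

Lemma isc_q n : (2 ^+ n)^-1 * P2 ^+ n = q ^+ n.
Proof. by rewrite /q exprMn exprVn mulrC. Qed.

Lemma H_bnd x n : nrm (H x - g x n) <= cx x / (1 - q) * q ^+ n.
Proof. by rewrite nrmB mulrAC; exact: (H_cvg x).2. Qed.

Lemma cx_ge0 x : 0 <= cx x.
Proof. by rewrite /cx mulr_ge0 // powR_ge0. Qed.

Lemma H_T (mu : R[i]) x y : `|mu| = 1 -> H (mu *: x + y) = mu *: H x + H y.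
Proof.
move=> mu1.
apply: (@H_near _ ((cx x + cx y) / (1 - q) + theta * (powR (nrm x) p + powR (nrm y) p))) => n.
rewrite (id3 _ _ _ (mu *: g x n) (g y n)) -scalerBr.
have -> : mu *: g x n + g y n - g (mu *: x + y) n =
   - (isc n *: (f (mu *: (sc n *: x) + sc n *: y) - mu *: f (sc n *: x) - f (sc n *: y))).
  rewrite -id4 /g; congr (_ - _); congr (_ *: f _).
  by rewrite scalerDr !scalerA mulrC.
apply: (le_trans (nrmD _ _)); rewrite nrmN nrm_isc.
have e1 := H_bnd x n; have e2 := H_bnd y n.
have e3 := h1 (sc n *: x) (sc n *: y) mu1.
rewrite !nrm_sc !powR_2n ?nrm_ge0 // in e3.
have := nrmD (mu *: (H x - g x n)) (H y - g y n); rewrite nrmZ mu1 /= mul1r => e4.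
have e5 : (2 ^+ n)^-1 * nrm (f (mu *: (sc n *: x) + sc n *: y) - mu *: f (sc n *: x) - f (sc n *: y))
   <= (2 ^+ n)^-1 * (theta * (P2 ^+ n * powR (nrm x) p + P2 ^+ n * powR (nrm y) p)).
  by apply: ler_wpM2l => //; rewrite invr_ge0 exprn_ge0.
have E : (2 ^+ n)^-1 * (theta * (P2 ^+ n * powR (nrm x) p + P2 ^+ n * powR (nrm y) p)) =
    theta * (powR (nrm x) p + powR (nrm y) p) * q ^+ n.
  by rewrite -isc_q; ring.
rewrite E in e5.
rewrite mulrDl mulrDl mulrDl.
lra.
Qed.


Lemma H_add x y : H (x + y) = H x + H y.
Proof. by have := H_T x y (normr1 _); rewrite !scale1r. Qed.

Lemma H0 : H 0 = 0.
Proof. by apply: (addrI (H 0)); rewrite -H_add !addr0. Qed.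

Lemma H_unit (mu : R[i]) x : `|mu| = 1 -> H (mu *: x) = mu *: H x.
Proof. by move=> mu1; have := H_T x 0 mu1; rewrite !addr0 H0 addr0. Qed.

Lemma H_nat (n : nat) x : H ((n%:R : R[i]) *: x) = (n%:R : R[i]) *: H x.
Proof.
elim: n => [|n IH]; first by rewrite !scale0r H0.
by rewrite -natr1 !scalerDl !scale1r H_add IH.
Qed.

Lemma H_small (r : R) x : `|r| < 1 -> H (r%:C *: x) = r%:C *: H x.
Proof.
move=> r1.
have r2 : 0 <= 1 - r ^+ 2 / 4%:R.
  rewrite subr_ge0 ler_pdivrMr // mul1r.
  have : r ^+ 2 <= 1 by rewrite -real_normK ?num_real // expr_le1 // ltW.
  lra.
set s := Num.sqrt (1 - r ^+ 2 / 4%:R).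
set w : R[i] := Complex (r / 2%:R) s.
have w1 : `|w| = 1.
  rewrite normc_def /= sqr_sqrtr // -[X in _ = X](rmorph1 (real_complex R)); congr (_%:C).
  rewrite -[X in _ = X]sqrtr1; congr (Num.sqrt _).
  by rewrite exprMn exprVn; field.
have wc1 : `|w^*| = 1.
  rewrite -w1 !normc_def /=; congr (_%:C); congr (Num.sqrt _); congr (_ + _).
  by rewrite sqrrN.
have ww : w + w^* = r%:C.
  apply/eqP; rewrite eq_complex /=; apply/andP; split; apply/eqP; [by field | exact: subrr].
by rewrite -ww scalerDl H_T // H_unit // scalerDl.
Qed.

Lemma H_real (r : R) x : H (r%:C *: x) = r%:C *: H x.
Proof.
set N := Num.Def.archi_bound r.
have rN : `|r| < N%:R by apply: unstable.ltr_norm_bound.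
have N0 : (0 : R) < N%:R by apply: le_lt_trans rN.
have e : r%:C = (N%:R : R[i]) * (r / N%:R)%:C.
  by rewrite -(rmorph_nat (real_complex R)) -rmorphM; congr (_%:C); field; rewrite gt_eqF.
rewrite e -!scalerA H_nat H_small //.
by rewrite normrM normfV (ger0_norm (ltW N0)) ltr_pdivrMr // mul1r.
Qed.

Lemma H_lin (l : R[i]) x : H (l *: x) = l *: H x.
Proof.
have ni : `|'i : R[i]| = 1.
  by rewrite normc_def /= expr0n expr1n add0r sqrtr1.
rewrite [l]complexE scalerDl H_add mulrC -scalerA H_real H_real H_unit //.
by rewrite scalerA -scalerDl [_ * 'i%C]mulrC.
Qed.


Lemma small_eq (v w : Y) (c : R) : (forall n, nrm (v - w) <= c * q ^+ n) -> w = v.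
Proof. by move=> hb; apply: (lim_eq hq (cvg_cst w)) => n; apply: hb. Qed.

Lemma conj_real (r : R) : (r%:C)^* = r%:C.
Proof. by apply/eqP; rewrite eq_complex /= oppr0 !eqxx. Qed.

Lemma sub_chain (V : zmodType) (a b c : V) : a - c = (a - b) + (b - c).
Proof. by rewrite addrA subrK. Qed.

Lemma M1 x y z : H (actX (ipX x y) z) = actY (ipY (f x) (f y)) (H z).
Proof.
set a := ipX x y; set b := ipY (f x) (f y).
apply: (@H_near _ (nrm b * (cx z / (1 - q)) + theta * (powR (nrm x) p + powR (nrm y) p + powR (nrm z) p))) => n.
rewrite (sub_chain _ (actY b (g z n))) -(act_subr hY).
have -> : actY b (g z n) - g (actX a z) n =
    - (isc n *: (f (actX a (sc n *: z)) - actY b (f (sc n *: z)))).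
  by rewrite /g (act_scaler hY) (act_scaler hX) scalerBr opprB.
apply: (le_trans (nrmD _ _)); rewrite nrmN nrm_isc.
have e1 := act_nrm hB hY b (H z - g z n).
have e2 := H_bnd z n.
have e3 := h2 x y (sc n *: z).
rewrite nrm_sc powR_2n ?nrm_ge0 // in e3.
have P2n : 1 <= P2 ^+ n by apply: exprn_ege1; apply: P2_ge1.
have i0 : 0 <= (2 ^+ n : R)^-1 by rewrite invr_ge0 exprn_ge0.
have e4 : (2 ^+ n)^-1 * nrm (f (actX a (sc n *: z)) - actY b (f (sc n *: z)))
   <= (2 ^+ n)^-1 * (theta * (powR (nrm x) p + powR (nrm y) p + P2 ^+ n * powR (nrm z) p)).
  by apply: ler_wpM2l.
have e5 : (2 ^+ n)^-1 * (theta * (powR (nrm x) p + powR (nrm y) p + P2 ^+ n * powR (nrm z) p))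
   <= theta * (powR (nrm x) p + powR (nrm y) p + powR (nrm z) p) * q ^+ n.
  rewrite -isc_q.
  have Px := powR_ge0 (nrm x) p; have Py := powR_ge0 (nrm y) p.
  have hh : 0 <= (2 ^+ n)^-1 * theta * (powR (nrm x) p + powR (nrm y) p) * (P2 ^+ n - 1).
    by rewrite mulr_ge0 ?subr_ge0 // !mulr_ge0 ?addr_ge0.
  set i := (2 ^+ n : R)^-1 in hh i0 *; set P := P2 ^+ n in hh P2n *.
  set a1 := powR (nrm x) p in hh Px *; set a2 := powR (nrm y) p in hh Py *.
  nra.
have e6 : nrm b * nrm (H z - g z n) <= nrm b * (cx z / (1 - q) * q ^+ n).
  by apply: ler_wpM2l => //; apply: nrm_ge0.
rewrite mulrDl -mulrA.
lra.
Qed.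


Lemma isc_sc (V : lmodType R[i]) n (v : V) : isc n *: (sc n *: v) = v.
Proof. by rewrite scalerA mulrC sc_isc scale1r. Qed.

Lemma M2 x y z : H (actX (ipX x y) z) = actY (ipY (H x) (f y)) (H z).
Proof.
set w := actX (ipX x y) z.
have E : forall n, H w = actY (ipY (g x n) (f y)) (H z).
  move=> n; have := M1 (sc n *: x) y z.
  rewrite (ip_scalel hX) (act_scalel hX) H_lin -/w => e.
  by rewrite -(isc_sc n (H w)) e /g (ip_scalel hY) (act_scalel hY).
apply: (@small_eq _ _ (4%:R * (cx x / (1 - q)) * nrm (f y) * nrm (H z))) => n.
rewrite (E n) -(act_subl hY) -(ip_subl hY).
apply: (le_trans (act_nrm hB hY _ _)).
have e1 := ip_bound hB hY (H x - g x n) (f y).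
have e2 := H_bnd x n.
have n1 := nrm_ge0 (f y); have n2 := nrm_ge0 (H z).
have n3 := nrm_ge0 (H x - g x n).
have n4 := nrm_ge0 (ipY (H x - g x n) (f y)).
have e3 : nrm (ipY (H x - g x n) (f y)) * nrm (H z) <= 4%:R * nrm (H x - g x n) * nrm (f y) * nrm (H z).
  by apply: ler_wpM2r.
apply: (le_trans e3).
have hh : 0 <= 4%:R * nrm (f y) * nrm (H z) * (cx x / (1 - q) * q ^+ n - nrm (H x - g x n)).
  by rewrite mulr_ge0 ?subr_ge0 // !mulr_ge0.
set K := cx x / (1 - q) in hh e2 *; set Q := q ^+ n in hh e2 *.
set N := nrm (H x - g x n) in hh e2 n3 *.
nra.
Qed.

Lemma M3 x y z : H (actX (ipX x y) z) = actY (ipY (H x) (H y)) (H z).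
Proof.
set w := actX (ipX x y) z.
have E : forall n, H w = actY (ipY (H x) (g y n)) (H z).
  move=> n; have := M2 x (sc n *: y) z.
  rewrite (ip_scaler hA hX) conj_real (act_scalel hX) H_lin -/w => e.
  by rewrite -(isc_sc n (H w)) e /g (ip_scaler hB hY) conj_real (act_scalel hY).
apply: (@small_eq _ _ (4%:R * nrm (H x) * (cx y / (1 - q)) * nrm (H z))) => n.
rewrite (E n) -(act_subl hY) -(ip_subr hB hY).
apply: (le_trans (act_nrm hB hY _ _)).
have e1 := ip_bound hB hY (H x) (H y - g y n).
have e2 := H_bnd y n.
have n1 := nrm_ge0 (H x); have n2 := nrm_ge0 (H z).
have n3 := nrm_ge0 (H y - g y n).
have e3 : nrm (ipY (H x) (H y - g y n)) * nrm (H z) <= 4%:R * nrm (H x) * nrm (H y - g y n) * nrm (H z).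
  by apply: ler_wpM2r.
apply: (le_trans e3).
have hh : 0 <= 4%:R * nrm (H x) * nrm (H z) * (cx y / (1 - q) * q ^+ n - nrm (H y - g y n)).
  by rewrite mulr_ge0 ?subr_ge0 // !mulr_ge0.
set K := cx y / (1 - q) in hh e2 *; set Q := q ^+ n in hh e2 *.
set N := nrm (H y - g y n) in hh e2 n3 *.
nra.
Qed.

Lemma H_hom : is_Hilbert_hom actX ipX actY ipY H.
Proof.
split; first exact: H_add.
split; first exact: H_lin.
exact: M3.
Qed.

Lemma H_unique (H' : X -> Y) : is_Hilbert_hom actX ipX actY ipY H' ->
  (forall x : X, nrm (f x - H' x) <= 2 * theta / (2 - powR 2 p) * powR (nrm x) p) ->
  H' = H.
Proof.
move=> [_ [hl _]] hb; apply: funext => x; apply: esym.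
apply: (@H_near _ (2 * theta / (2 - powR 2 p) * powR (nrm x) p)) => n.
have -> : H' x - g x n = isc n *: (H' (sc n *: x) - f (sc n *: x)).
  by rewrite hl scalerBr isc_sc.
rewrite nrm_isc nrmB.
have := hb (sc n *: x); rewrite nrm_sc powR_2n ?nrm_ge0 // => e.
have i0 : 0 <= (2 ^+ n : R)^-1 by rewrite invr_ge0 exprn_ge0.
apply: (le_trans (ler_wpM2l i0 e)).
rewrite -isc_q le_eqVlt; apply/orP; left; apply/eqP; ring.
Qed.

End Main.



Close Scope complex_scope.
Close Scope classical_set_scope.

Theorem corollary2p3 (R : realType)
  (A : completeNormedModType R[i]) (mulA : A -> A -> A) (starA : A -> A)
  (B : completeNormedModType R[i]) (mulB : B -> B -> B) (starB : B -> B)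
  (X : completeNormedModType R[i]) (actX : A -> X -> X) (ipX : X -> X -> A)
  (Y : completeNormedModType R[i]) (actY : B -> Y -> Y) (ipY : Y -> Y -> B)
  (hA : is_Cstar_algebra mulA starA) (hB : is_Cstar_algebra mulB starB)
  (hX : is_Hilbert_module mulA starA actX ipX)
  (hY : is_Hilbert_module mulB starB actY ipY)
  (p theta : R) (hp0 : 0 <= p) (hp1 : p < 1) (htheta : 0 <= theta)
  (f : X -> Y)
  (h1 : forall (mu : R[i]) (x y : X), `|mu| = 1 ->
          nrm (f (mu *: x + y) - mu *: f x - f y)
            <= theta * (powR (nrm x) p + powR (nrm y) p))
  (h2 : forall x y z : X,
          nrm (f (actX (ipX x y) z) - actY (ipY (f x) (f y)) (f z))
            <= theta * (powR (nrm x) p + powR (nrm y) p + powR (nrm z) p)) :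
  exists! H : X -> Y,
    is_Hilbert_hom actX ipX actY ipY H /\
    (forall x : X, nrm (f x - H x) <= 2 * theta / (2 - powR 2 p) * powR (nrm x) p).
Proof.
exists (H f); split.
  by split; [exact: (H_hom hA hB hX hY hp0 hp1 htheta h1 h2) | exact: (H_bound hp1 h1)].
by move=> H' [hh hb]; apply: esym; apply: (H_unique hp1 h1 hh hb).
Qed.
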